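(* Let $I\subset\mathbb{R}$ be an open interval and $W\subset I$ a countable subset which is dense in $I$; let $\check I$ be the fractured interval of $I$ at $W$. Then the sets $[a^R,b^L]\cap\check I$ for $a<b$ in $W$ form a basis for the topology of $\check I$, and each of these sets is homeomorphic to the Cantor set.
   Context: The divided interval of $I$ at $W$ is the set $\hat I = \{w^{L}, \hat w, w^{R} : w\in W\}\sqcup (I\smallsetminus W)$, with $\pi\colon\hat I\to I$ sending $w^L,\hat w,w^R$ to $w$ and fixing $I\smallsetminus W$, totally ordered so that $\pi$ is order preserving and $w^L<\hat w<w^R$. For $a,b\in\hat I\cup\{\pm\infty\}$, $(a,b)=\{s: a<s<b\}$; basis intervals are the nonempty $(a,b)$ other than those with $a=w^L$ or $b=w^R$ ($w\in W$), and they generate the topology of $\hat I$. The fractured interval is $\check I = \hat I\smallsetminus\{\hat w: w\in W\}$ with the subspace topology; $[a^R,b^L]=\{s: a^R\le s\le b^L\}$. *)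

(* Defs.v *)
From Stdlib Require Import Reals.
Open Scope R_scope.

Definition topology (T : Type) := (T -> Prop) -> Prop.

Definition subspace {T : Type} (tau : topology T) (P : T -> Prop)
  : topology {x : T | P x} :=
  fun V => exists U, tau U /\ forall x : {x : T | P x}, V x <-> U (proj1_sig x).

Definition continuous {X Y : Type} (tX : topology X) (tY : topology Y)
  (f : X -> Y) : Prop :=
  forall V, tY V -> tX (fun x => V (f x)).

Definition homeomorphic {X Y : Type} (tX : topology X) (tY : topology Y) : Prop :=
  exists (f : X -> Y) (g : Y -> X),
    (forall x, g (f x) = x) /\ (forall y, f (g y) = y) /\
    continuous tX tY f /\ continuous tY tX g.

Definition R_open : topology R :=
  fun U => forall x, U x -> exists eps, 0 < eps /\
     forall y, Rabs (y - x) < eps -> U y.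

Definition Cantor (x : R) : Prop :=
  exists d : nat -> bool,
    infinite_sum (fun i => (if d i then 2 else 0) / 3 ^ (S i)) x.

Definition is_open_interval (I : R -> Prop) : Prop :=
  exists lo hi : option R, forall x,
    I x <-> ((match lo with None => True | Some l => l < x end) /\
             (match hi with None => True | Some h => x < h end)).

Definition countable_set (W : R -> Prop) : Prop :=
  exists f : {x : R | W x} -> nat, forall p q, f p = f q -> p = q.

Definition dense_in (W I : R -> Prop) : Prop :=
  forall U, R_open U -> (exists x, I x /\ U x) -> exists w, W w /\ I w /\ U w.

Inductive tag := TL | TM | TR.   (* w^L, \hat w, w^R ; points of I \ W carry TM *)

Definition tag_lt (s t : tag) : Prop :=
  match s, t with
  | TL, TM | TL, TR | TM, TR => True
  | _, _ => False
  end.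

Definition hatI (I W : R -> Prop) : Type :=
  {p : R * tag | I (fst p) /\ (W (fst p) \/ snd p = TM)}.

Definition hpt {I W : R -> Prop} (s : hatI I W) : R * tag := proj1_sig s.

Definition plt (p q : R * tag) : Prop :=
  fst p < fst q \/ (fst p = fst q /\ tag_lt (snd p) (snd q)).
Definition ple (p q : R * tag) : Prop := plt p q \/ p = q.

Inductive ext (X : Type) := NegInf | Pt (x : X) | PosInf.
Arguments NegInf {X}. Arguments Pt {X} x. Arguments PosInf {X}.

Definition ext_lt {I W : R -> Prop} (a b : ext (hatI I W)) : Prop :=
  match a, b with
  | NegInf, Pt _ | NegInf, PosInf | Pt _, PosInf => True
  | Pt s, Pt t => plt (hpt s) (hpt t)
  | _, _ => False
  end.

Definition oint {I W : R -> Prop} (a b : ext (hatI I W)) (s : hatI I W) : Prop :=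
  ext_lt a (Pt s) /\ ext_lt (Pt s) b.

Definition basis_interval {I W : R -> Prop} (a b : ext (hatI I W)) : Prop :=
  (exists s, oint a b s) /\
  (forall s, a = Pt s -> snd (hpt s) <> TL) /\
  (forall s, b = Pt s -> snd (hpt s) <> TR).

Definition hat_open (I W : R -> Prop) : topology (hatI I W) :=
  fun U => forall s, U s -> exists a b, basis_interval a b /\ oint a b s /\
     forall t, oint a b t -> U t.

Definition in_check (I W : R -> Prop) (s : hatI I W) : Prop :=
  ~ (W (fst (hpt s)) /\ snd (hpt s) = TM).

Definition checkI (I W : R -> Prop) : Type := {s : hatI I W | in_check I W s}.

Definition check_open (I W : R -> Prop) : topology (checkI I W) :=
  subspace (hat_open I W) (in_check I W).

Definition closed_seg (I W : R -> Prop) (a b : R) (s : checkI I W) : Prop :=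
  ple (a, TR) (hpt (proj1_sig s)) /\ ple (hpt (proj1_sig s)) (b, TL).

(* Main.v *)
Require Import Defs.
From Stdlib Require Import Reals Lra Lia ClassicalEpsilon ProofIrrelevance FunctionalExtensionality Classical.
Open Scope R_scope.

Lemma plt_trans p q r : plt p q -> plt q r -> plt p r.
Proof.
  destruct p as [x s], q as [y t], r as [z u]; unfold plt; simpl.
  intros [H|[H1 H2]] [H'|[H1' H2']]; subst; try (left; lra).
  right; split; auto. destruct s, t, u; simpl in *; tauto.
Qed.

Lemma plt_irrefl p : ~ plt p p.
Proof. destruct p as [x s]; unfold plt; simpl. intros [H|[_ H]]; [lra| destruct s; simpl in H; auto]. Qed.

Lemma plt_asym p q : plt p q -> ~ plt q p.
Proof. intros H H'. apply (plt_irrefl p). eapply plt_trans; eauto. Qed.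

Lemma ple_plt_trans p q r : ple p q -> plt q r -> plt p r.
Proof. intros [H|H] H'; [eapply plt_trans; eauto | subst; auto]. Qed.

Lemma plt_ple_trans p q r : plt p q -> ple q r -> plt p r.
Proof. intros H [H'|H']; [eapply plt_trans; eauto | subst; auto]. Qed.

Lemma plt_total p q : plt p q \/ p = q \/ plt q p.
Proof.
  destruct p as [x s], q as [y t]; unfold plt; simpl.
  destruct (Rtotal_order x y) as [H|[H|H]]; [left; left; auto| |right; right; left; auto].
  subst. destruct s, t; simpl; tauto.
Qed.

Lemma not_plt_ple p q : ~ plt q p -> ple p q.
Proof. intros H. destruct (plt_total p q) as [H1|[H1|H1]]; [left|right|]; tauto. Qed.

Section IW.
Variables I W : R -> Prop.
Hypothesis HI : is_open_interval I.
Hypothesis HWI : forall w, W w -> I w.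
Hypothesis HWd : dense_in W I.

Lemma I_conv x y z : I x -> I y -> x <= z <= y -> I z.
Proof.
  destruct HI as [lo [hi H]]. rewrite !H. intros [A B] [C D] E.
  split; [destruct lo | destruct hi]; auto; lra.
Qed.

Lemma I_left x p : I x -> p < x -> exists z, I z /\ p < z < x.
Proof.
  destruct HI as [lo [hi H]]. intros Hx Hp. pose proof Hx as Hx'. rewrite H in Hx'.
  destruct Hx' as [A B].
  destruct lo as [l|].
  - exists ((x + Rmax p l)/2). assert (Rmax p l < x) by (apply Rmax_lub_lt; lra).
    pose proof (Rmax_l p l); pose proof (Rmax_r p l).
    split; [|lra]. apply (I_conv ((x + Rmax p l)/2) x); [|auto|lra].
    rewrite H; split; [lra|]. destruct hi; auto; lra.
  - exists ((x+p)/2). split; [|lra]. rewrite H; split; auto. destruct hi; auto; lra.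
Qed.

Lemma I_right x p : I x -> x < p -> exists z, I z /\ x < z < p.
Proof.
  destruct HI as [lo [hi H]]. intros Hx Hp. pose proof Hx as Hx'. rewrite H in Hx'.
  destruct Hx' as [A B].
  destruct hi as [h|].
  - exists ((x + Rmin p h)/2). assert (x < Rmin p h) by (apply Rmin_glb_lt; lra).
    pose proof (Rmin_l p h); pose proof (Rmin_r p h).
    split; [|lra]. rewrite H; split; [destruct lo; auto; lra| lra].
  - exists ((x+p)/2). split; [|lra]. rewrite H; split; auto. destruct lo; auto; lra.
Qed.

Lemma dens_between x y z : I z -> x < z < y -> exists w, W w /\ x < w < y.
Proof.
  intros Hz Hr.
  destruct (HWd (fun u => x < u < y)) as [w [Hw [_ Hu]]].
  - intros u Hu. exists (Rmin (u - x) (y - u)). split.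
    + apply Rmin_glb_lt; lra.
    + intros v Hv. pose proof (Rmin_l (u-x) (y-u)); pose proof (Rmin_r (u-x) (y-u)).
      apply Rabs_def2 in Hv. lra.
  - exists z; auto.
  - exists w; auto.
Qed.

Lemma dens_left x p : I x -> p < x -> exists w, W w /\ p < w < x.
Proof. intros Hx Hp. destruct (I_left x p Hx Hp) as [z [Hz Hr]]. apply (dens_between p x z); auto; lra. Qed.
Lemma dens_right x p : I x -> x < p -> exists w, W w /\ x < w < p.
Proof. intros Hx Hp. destruct (I_right x p Hx Hp) as [z [Hz Hr]]. apply (dens_between x p z); auto; lra. Qed.

End IW.
Section Topo.
Variables I W : R -> Prop.
Hypothesis HI : is_open_interval I.
Hypothesis HWI : forall w, W w -> I w.
Hypothesis HWd : dense_in W I.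

Lemma check_open_crit (V : checkI I W -> Prop) :
  (forall t, V t -> exists p q, basis_interval p q /\ oint p q (proj1_sig t) /\
      forall t', oint p q (proj1_sig t') -> V t') -> check_open I W V.
Proof.
  intros H.
  exists (fun s => exists p q, basis_interval p q /\ oint p q s /\
      forall t' : checkI I W, oint p q (proj1_sig t') -> V t').
  split.
  - intros s [p [q [Hb [Ho Hall]]]]. exists p, q. split; [auto|split; auto].
    intros t Ht. exists p, q. auto.
  - intros t; split.
    + intros Ht. apply H; auto.
    + intros [p [q [_ [Ho Hall]]]]. apply Hall; auto.
Qed.

Lemma check_open_elim (V : checkI I W -> Prop) t :
  check_open I W V -> V t -> exists p q, basis_interval p q /\ oint p q (proj1_sig t) /\
      forall t', oint p q (proj1_sig t') -> V t'.
Proof.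
  unfold check_open, subspace, hat_open. intros [U [HU HV]] Ht. apply HV in Ht. destruct (HU _ Ht) as [p [q [Hb [Ho Hall]]]].
  exists p, q; split; [auto|split; [auto|]]. intros t' H'. apply HV. auto.
Qed.

Lemma hat_between_l a s : plt (a,TM) s -> ple (a,TR) s.
Proof.
  destruct s as [x t]; unfold plt, ple; simpl. intros [H|[H1 H2]]; [left; left; auto|].
  subst. destruct t; simpl in H2; try tauto; right; auto.
Qed.
Lemma hat_between_r b s : plt s (b,TM) -> ple s (b,TL).
Proof.
  destruct s as [x t]; unfold plt, ple; simpl. intros [H|[H1 H2]]; [left; left; auto|].
  subst. destruct t; simpl in H2; try tauto; right; auto.
Qed.

Definition mkhat x (Hx : I x) : hatI I W := exist _ (x,TM) (conj Hx (or_intror eq_refl)).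

Lemma part1 a b : W a -> W b -> a < b -> check_open I W (closed_seg I W a b).
Proof.
  intros Wa Wb ab. apply check_open_crit. intros t [H1 H2].
  exists (Pt (mkhat a (HWI a Wa))), (Pt (mkhat b (HWI b Wb))).
  assert (oint (Pt (mkhat a (HWI a Wa))) (Pt (mkhat b (HWI b Wb))) (proj1_sig t)) as Ho.
  { split; simpl.
    - apply (plt_ple_trans _ (a,TR)); auto. right; split; simpl; auto.
    - apply (ple_plt_trans _ (b,TL)); auto. right; split; simpl; auto. }
  split; [|split; auto].
  - split; [exists (proj1_sig t); auto|]. split; intros s Hs; inversion Hs; subst; simpl; discriminate.
  - intros t' [Ha Hb]. simpl in Ha, Hb. split; [apply hat_between_l|apply hat_between_r]; auto.
Qed.

Lemma hok (s : hatI I W) : I (fst (hpt s)) /\ (W (fst (hpt s)) \/ snd (hpt s) = TM).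
Proof. exact (proj2_sig s). Qed.

Lemma lower_y (s : hatI I W) (p : ext (hatI I W)) :
  (forall pp, p = Pt pp -> snd (hpt pp) <> TL) -> ext_lt p (Pt s) -> snd (hpt s) <> TR ->
  exists y, y < fst (hpt s) /\ forall s', plt (y,TR) (hpt s') -> ext_lt p (Pt s').
Proof.
  intros Hp Hlt Htg.
  destruct p as [|pp|]; simpl in *; [| |tauto].
  - exists (fst (hpt s) - 1). split; [lra|auto].
  - assert (HH := Hp pp eq_refl).
    destruct (hpt pp) as [z u] eqn:Ez; destruct (hpt s) as [x tg]; simpl in *.
    exists z. destruct Hlt as [Hlt|[Hlt1 Hlt2]].
    + split; auto. intros s' Hs'. apply (ple_plt_trans _ (z,TR)); auto.
      destruct u; simpl in *; [tauto | left; right; simpl; auto | right; auto].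
    + subst. destruct u, tg; simpl in *; tauto.
Qed.

Lemma lower_exists (s : hatI I W) (p : ext (hatI I W)) :
  (forall pp, p = Pt pp -> snd (hpt pp) <> TL) -> ext_lt p (Pt s) ->
  exists a, W a /\ ple (a,TR) (hpt s) /\ forall s', ple (a,TR) (hpt s') -> ext_lt p (Pt s').
Proof.
  intros Hp Hlt. destruct (hok s) as [Ix Hw].
  destruct (classic (snd (hpt s) = TR)) as [Htr|Htr].
  - destruct Hw as [Hw|Hw]; [|congruence].
    assert (E: hpt s = (fst (hpt s), TR)) by (rewrite <- Htr; apply surjective_pairing).
    exists (fst (hpt s)). split; auto. split.
    + right. auto.
    + intros s' Hs'. destruct p as [|pp|]; simpl in *; auto.
      eapply plt_ple_trans; eauto. rewrite E; auto.
  - destruct (lower_y s p Hp Hlt Htr) as [y [Hy Hall]].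
    destruct (dens_left I W HI HWd _ y Ix Hy) as [a [Wa Ha]].
    exists a; split; auto. split.
    + left; left; simpl; lra.
    + intros s' Hs'. apply Hall. apply (plt_ple_trans _ (a,TR)); auto. left; simpl; lra.
Qed.

Lemma upper_y (s : hatI I W) (q : ext (hatI I W)) :
  (forall qq, q = Pt qq -> snd (hpt qq) <> TR) -> ext_lt (Pt s) q -> snd (hpt s) <> TL ->
  exists y, fst (hpt s) < y /\ forall s', plt (hpt s') (y,TL) -> ext_lt (Pt s') q.
Proof.
  intros Hq Hlt Htg.
  destruct q as [|qq|]; simpl in *; [tauto| |].
  - assert (HH := Hq qq eq_refl).
    destruct (hpt qq) as [z u] eqn:Ez; destruct (hpt s) as [x tg]; simpl in *.
    exists z. destruct Hlt as [Hlt|[Hlt1 Hlt2]].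
    + split; auto. intros s' Hs'. apply (plt_ple_trans _ (z,TL)); auto.
      destruct u; simpl in *; [right; auto | left; right; simpl; auto | tauto].
    + subst. destruct u, tg; simpl in *; tauto.
  - exists (fst (hpt s) + 1). split; [lra|auto].
Qed.

Lemma upper_exists (s : hatI I W) (q : ext (hatI I W)) :
  (forall qq, q = Pt qq -> snd (hpt qq) <> TR) -> ext_lt (Pt s) q ->
  exists b, W b /\ ple (hpt s) (b,TL) /\ forall s', ple (hpt s') (b,TL) -> ext_lt (Pt s') q.
Proof.
  intros Hq Hlt. destruct (hok s) as [Ix Hw].
  destruct (classic (snd (hpt s) = TL)) as [Htr|Htr].
  - destruct Hw as [Hw|Hw]; [|congruence].
    assert (E: hpt s = (fst (hpt s), TL)) by (rewrite <- Htr; apply surjective_pairing).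
    exists (fst (hpt s)). split; auto. split.
    + right. auto.
    + intros s' Hs'. destruct q as [|qq|]; simpl in *; auto.
      apply (ple_plt_trans _ (fst (hpt s), TL)); auto. rewrite <- E; auto.
  - destruct (upper_y s q Hq Hlt Htr) as [y [Hy Hall]].
    destruct (dens_right I W HI HWd _ y Ix Hy) as [b [Wb Hb]].
    exists b; split; auto. split.
    + left; left; simpl; lra.
    + intros s' Hs'. apply Hall. apply (ple_plt_trans _ (b,TL)); auto. left; simpl; lra.
Qed.

Lemma seg_lt a b s : ple (a,TR) s -> ple s (b,TL) -> a < b.
Proof.
  intros H1 H2. assert (plt (a,TR) (b,TL)) as H.
  { destruct H1 as [H1|H1]; [eapply plt_ple_trans; eauto|subst].
    destruct H2 as [H2|H2]; auto. inversion H2. }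
  destruct H as [H|[H H']]; simpl in *; auto. tauto.
Qed.

Lemma part2 (V : checkI I W -> Prop) : check_open I W V -> forall t, V t ->
  exists a b, W a /\ W b /\ a < b /\ closed_seg I W a b t /\
    forall t', closed_seg I W a b t' -> V t'.
Proof.
  intros HV t Ht. destruct (check_open_elim V t HV Ht) as [p [q [[_ [Hp Hq]] [[Ho1 Ho2] Hall]]]].
  destruct (lower_exists _ p Hp Ho1) as [a [Wa [Ha Ha']]].
  destruct (upper_exists _ q Hq Ho2) as [b [Wb [Hb Hb']]].
  exists a, b. split; auto. split; auto. split; [eapply seg_lt; eauto|]. split; [split; auto|].
  intros t' [H1 H2]. apply Hall. split; auto.
Qed.

End Topo.
Definition term (d : nat -> bool) (i : nat) : R := (if d i then 2 else 0) / 3 ^ (S i).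
Definition cs d N := sum_f_R0 (term d) N.

Lemma pow3_pos n : 0 < 3 ^ n.
Proof. apply pow_lt; lra. Qed.

Lemma inv3S n : / 3 ^ (S n) = / 3 ^ n / 3.
Proof. simpl. field. pose proof (pow3_pos n); lra. Qed.

Lemma inv3_pos n : 0 < / 3 ^ n.
Proof. apply Rinv_0_lt_compat, pow3_pos. Qed.

Lemma term_bound d i : 0 <= term d i <= 2 * / 3 ^ (S i).
Proof.
  unfold term, Rdiv. pose proof (inv3_pos (S i)). destruct (d i); split; nra.
Qed.

Lemma Rabs_le_between x r : Rabs x <= r <-> - r <= x <= r.
Proof. unfold Rabs; destruct (Rcase_abs x); split; intros; lra. Qed.

Lemma term_diff d e i : Rabs (term d i - term e i) <= 2 * / 3 ^ (S i).
Proof.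
  unfold term, Rdiv. pose proof (inv3_pos (S i)).
  destruct (d i), (e i); rewrite Rabs_le_between; nra.
Qed.

Lemma cs_bound d N : cs d N <= 1 - / 3 ^ (S N).
Proof.
  induction N; unfold cs in *; simpl sum_f_R0.
  - pose proof (term_bound d 0). simpl in *. lra.
  - pose proof (term_bound d (S N)). rewrite (inv3S (S N)). rewrite (inv3S (S N)) in H. lra.
Qed.

Lemma cs_growing d : Un_growing (cs d).
Proof. intros n. unfold cs. simpl. pose proof (term_bound d (S n)). lra. Qed.

Lemma cs_ub d : has_ub (cs d).
Proof. exists 1. intros x [n ->]. pose proof (cs_bound d n). pose proof (inv3_pos (S n)). lra. Qed.

Definition val d : R := proj1_sig (growing_cv (cs d) (cs_growing d) (cs_ub d)).
Lemma val_cv d : Un_cv (cs d) (val d).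
Proof. unfold val. destruct growing_cv; auto. Qed.

Lemma lim_close u v l m c r K : Un_cv u l -> Un_cv v m ->
  (forall N, (N >= K)%nat -> Rabs (u N - v N - c) <= r) -> Rabs (l - m - c) <= r.
Proof.
  intros Hu Hv H. apply Rnot_lt_le. intros Hlt.
  set (eps := (Rabs (l - m - c) - r) / 2).
  assert (eps > 0) by (unfold eps; lra).
  destruct (Hu eps H0) as [N1 H1]. destruct (Hv eps H0) as [N2 H2].
  set (N := (N1 + N2 + K)%nat).
  specialize (H1 N ltac:(lia)). specialize (H2 N ltac:(lia)). specialize (H N ltac:(lia)).
  unfold Rdist in *.
  assert (Rabs (l - m - c) <= Rabs (u N - v N - c) + Rabs (u N - l) + Rabs (v N - m)).
  { replace (l - m - c) with ((u N - v N - c) - (u N - l) + (v N - m)) by ring.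
    eapply Rle_trans; [apply Rabs_triang|]. apply Rplus_le_compat_r.
    eapply Rle_trans; [apply Rabs_triang|]. rewrite Rabs_Ropp. lra. }
  unfold eps in *. lra.
Qed.

Lemma cs_est d e n : (forall i, (i < n)%nat -> d i = e i) -> forall N,
  Rabs (cs d N - cs e N) + / 3 ^ (S N) <= / 3 ^ n \/ ((S N <= n)%nat /\ cs d N = cs e N).
Proof.
  intros Hde N. induction N.
  - unfold cs; simpl sum_f_R0. destruct n as [|n].
    + left. pose proof (term_diff d e 0). simpl in *. lra.
    + right. split; [lia|]. unfold term. rewrite (Hde 0%nat); [auto|lia].
  - unfold cs in *; simpl sum_f_R0.
    pose proof (term_diff d e (S N)).
    destruct IHN as [IH|[IH1 IH2]].
    + left. rewrite (inv3S (S N)) in *.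
      replace (sum_f_R0 (term d) N + term d (S N) - (sum_f_R0 (term e) N + term e (S N)))
        with ((sum_f_R0 (term d) N - sum_f_R0 (term e) N) + (term d (S N) - term e (S N))) by ring.
      pose proof (Rabs_triang (sum_f_R0 (term d) N - sum_f_R0 (term e) N) (term d (S N) - term e (S N))).
      lra.
    + destruct (Nat.eq_dec (S N) n) as [Hn|Hn].
      * left. rewrite IH2. subst n. rewrite (inv3S (S N)) in *.
        replace (sum_f_R0 (term e) N + term d (S N) - (sum_f_R0 (term e) N + term e (S N)))
          with (term d (S N) - term e (S N)) by ring. lra.
      * right. split; [lia|]. unfold term at 2 4. rewrite IH2, (Hde (S N)); [auto|lia].
Qed.

Lemma val_close d e n : (forall i, (i < n)%nat -> d i = e i) -> Rabs (val d - val e) <= / 3 ^ n.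
Proof.
  intros H. replace (val d - val e) with (val d - val e - 0) by ring.
  apply (lim_close _ _ _ _ _ _ 0 (val_cv d) (val_cv e)).
  intros N _. rewrite Rminus_0_r. destruct (cs_est d e n H N) as [H1|[_ H1]].
  - pose proof (inv3_pos (S N)). lra.
  - rewrite H1, Rminus_diag, Rabs_R0. left; apply inv3_pos.
Qed.

Lemma cs_agree d e N : (forall i, (i <= N)%nat -> d i = e i) -> cs d N = cs e N.
Proof.
  intros H. unfold cs. apply sum_eq. intros i Hi. unfold term. rewrite H; auto.
Qed.

Definition setk (e : nat -> bool) k : nat -> bool := fun i => if Nat.eq_dec i k then true else e i.

Lemma setk_diff e k : e k = false -> forall N, (k <= N)%nat -> cs (setk e k) N - cs e N = 2 * / 3 ^ (S k).
Proof.
  intros Hk N. induction N; intros HN.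
  - assert (k = 0%nat) by lia. subst. unfold cs, setk, term; simpl. rewrite Hk. field.
  - destruct (Nat.eq_dec k (S N)) as [E|E].
    + subst k. unfold cs; simpl sum_f_R0.
      change (sum_f_R0 (term (setk e (S N))) N) with (cs (setk e (S N)) N).
      change (sum_f_R0 (term e) N) with (cs e N).
      rewrite (cs_agree (setk e (S N)) e N).
      * unfold term, setk. destruct (Nat.eq_dec (S N) (S N)); [|tauto]. rewrite Hk.
        unfold Rdiv. ring.
      * intros i Hi. unfold setk. destruct (Nat.eq_dec i (S N)); [lia|auto].
    + unfold cs in *; simpl sum_f_R0. rewrite <- (IHN ltac:(lia)).
      assert (Ht : term (setk e k) (S N) = term e (S N)) by
        (unfold term, setk; destruct (Nat.eq_dec (S N) k); [lia|auto]).
      rewrite Ht. ring.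
Qed.

Lemma sep d e k : (forall i, (i < k)%nat -> d i = e i) -> d k = true -> e k = false ->
  val d - val e >= / 3 ^ (S k).
Proof.
  intros H Hd He.
  assert (A : Rabs (val d - val (setk e k)) <= / 3 ^ (S k)).
  { apply val_close. intros i Hi. unfold setk. destruct (Nat.eq_dec i k); [subst; auto|]. apply H; lia. }
  assert (B : Rabs (val (setk e k) - val e - 2 * / 3 ^ (S k)) <= 0).
  { apply (lim_close _ _ _ _ _ _ k (val_cv _) (val_cv _)).
    intros N HN. rewrite setk_diff; auto. rewrite Rminus_diag, Rabs_R0; lra. }
  pose proof (Rabs_pos (val (setk e k) - val e - 2 * / 3 ^ (S k))).
  apply Rabs_le_between in A. apply Rabs_le_between in B. lra.
Qed.

Lemma inv3_le m n : (m <= n)%nat -> / 3 ^ n <= / 3 ^ m.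
Proof.
  intros H. apply Rinv_le_contravar; [apply pow3_pos|]. apply Rle_pow; [lra|auto].
Qed.

Lemma agree_of_close d e n : Rabs (val d - val e) < / 3 ^ n -> forall i, (i < n)%nat -> d i = e i.
Proof.
  intros H i. induction i as [i IH] using (well_founded_induction Wf_nat.lt_wf). intros Hi.
  destruct (Bool.bool_dec (d i) (e i)) as [E|E]; auto. exfalso.
  assert (Hagree : forall j, (j < i)%nat -> d j = e j) by (intros j Hj; apply IH; lia).
  pose proof (inv3_le (S i) n Hi).
  destruct (d i) eqn:Ed, (e i) eqn:Ee; try tauto.
  - pose proof (sep d e i Hagree Ed Ee). apply Rabs_def2 in H. lra.
  - assert (Hagree' : forall j, (j < i)%nat -> e j = d j) by (intros; symmetry; auto).
    pose proof (sep e d i Hagree' Ee Ed). apply Rabs_def2 in H. lra.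
Qed.

Lemma val_inj d e : val d = val e -> d = e.
Proof.
  intros H. apply functional_extensionality. intros i.
  apply (agree_of_close d e (S i)); [|lia]. rewrite H, Rminus_diag, Rabs_R0. apply inv3_pos.
Qed.

Lemma val_cantor d : Cantor (val d).
Proof. exists d. exact (val_cv d). Qed.

Lemma cantor_val x (d : nat -> bool) : infinite_sum (fun i => (if d i then 2 else 0) / 3 ^ (S i)) x -> val d = x.
Proof. intros H. apply (UL_sequence (cs d)); [apply val_cv|exact H]. Qed.

Lemma small_pow eps : eps > 0 -> exists n, / 3 ^ n < eps.
Proof.
  intros He. destruct (pow_lt_1_zero (/3) ltac:(rewrite Rabs_pos_eq; lra) eps He) as [N HN].
  exists N. specialize (HN N (le_n N)). rewrite pow_inv in HN.
  rewrite Rabs_pos_eq in HN; auto. left; apply inv3_pos.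
Qed.
Definition bdec (P : Prop) : bool := if excluded_middle_informative P then true else false.
Lemma bdec_t (P : Prop) : bdec P = true <-> P.
Proof. unfold bdec. destruct excluded_middle_informative; split; auto; discriminate. Qed.
Lemma bdec_f (P : Prop) : bdec P = false <-> ~ P.
Proof. unfold bdec. destruct excluded_middle_informative; split; auto; try discriminate; tauto. Qed.

Lemma nat_min (P : nat -> Prop) : (exists n, P n) -> exists n, P n /\ forall m, P m -> (n <= m)%nat.
Proof.
  intros [n Hn]. apply NNPP. intros Hno.
  assert (forall k, forall m, (m <= k)%nat -> ~ P m).
  { induction k; intros m Hm HP.
    - apply Hno. exists m. split; auto. intros; lia.
    - apply Hno. exists m. split; auto. intros m' Hm'.
      destruct (Nat.lt_ge_cases m' m); [|auto]. exfalso. apply (IHk m'); auto; lia. }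
  apply (H n n); auto.
Qed.

Lemma ple_inj_l (x y : R) s : x <= y -> plt (y,TM) s -> plt (x,TM) s.
Proof. intros H H'. destruct H as [H|H]; [|subst; auto]. apply (ple_plt_trans _ (y,TM)); auto. left; left; auto. Qed.
Lemma ple_inj_r (x y : R) s : y <= x -> plt s (y,TM) -> plt s (x,TM).
Proof. intros H H'. destruct H as [H|H]; [|subst; auto]. apply (plt_ple_trans _ (y,TM)); auto. left; left; auto. Qed.

Section Tree.
Variables I W : R -> Prop.
Hypothesis HI : is_open_interval I.
Hypothesis HWI : forall w, W w -> I w.
Hypothesis HWd : dense_in W I.
Variable cd : R -> nat.
Hypothesis cd_inj : forall x y, W x -> W y -> cd x = cd y -> x = y.
Variables a b : R.
Hypothesis Wa : W a.
Hypothesis Wb : W b.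
Hypothesis ab : a < b.

Lemma dens2 x y : I x -> I y -> x < y -> exists w, W w /\ x < w < y.
Proof.
  intros Hx Hy Hxy. apply (dens_between I W HWd x y ((x+y)/2)); [|lra].
  apply (I_conv I HI x y); auto; lra.
Qed.

Definition split (A B : R) : R := epsilon (inhabits 0)
  (fun w => W w /\ A < w < B /\ forall w', W w' -> A < w' < B -> (cd w <= cd w')%nat).

Lemma split_spec A B : I A -> I B -> A < B ->
  W (split A B) /\ A < split A B < B /\ forall w', W w' -> A < w' < B -> (cd (split A B) <= cd w')%nat.
Proof.
  intros HA HB HAB. unfold split. apply epsilon_spec.
  destruct (nat_min (fun n => exists w, W w /\ A < w < B /\ cd w = n)) as [n [[w [Hw [Hr Hc]]] Hmin]].
  - destruct (dens2 A B HA HB HAB) as [w [Hw Hr]]. exists (cd w), w; auto.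
  - exists w. split; auto. split; auto. intros w' Hw' Hr'. rewrite Hc. apply Hmin. exists w'; auto.
Qed.

Definition mstep (p : R * R) (bit : bool) : R * R :=
  if bit then (split (fst p) (snd p), snd p) else (fst p, split (fst p) (snd p)).

Fixpoint path (d : nat -> bool) (n : nat) : R * R :=
  match n with O => (a, b) | S n => mstep (path d n) (d n) end.

Definition good (p : R * R) := W (fst p) /\ W (snd p) /\ fst p < snd p.

Lemma mstep_good p bit : good p -> good (mstep p bit) /\ fst p <= fst (mstep p bit) /\ snd (mstep p bit) <= snd p.
Proof.
  intros [H1 [H2 H3]].
  destruct (split_spec (fst p) (snd p) (HWI _ H1) (HWI _ H2) H3) as [Hw [Hr _]].
  unfold mstep, good; destruct bit; simpl; repeat split; auto; lra.
Qed.

Lemma path_good d n : good (path d n).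
Proof. induction n; simpl; [repeat split; auto|apply mstep_good; auto]. Qed.

Lemma path_mono d n m : (n <= m)%nat ->
  fst (path d n) <= fst (path d m) /\ snd (path d m) <= snd (path d n).
Proof.
  intros H. induction H; [lra|]. simpl. destruct (mstep_good (path d m) (d m) (path_good d m)) as [_ [A B]]. lra.
Qed.

Lemma path_lt d n m : fst (path d n) < snd (path d m).
Proof.
  destruct (Nat.le_ge_cases n m) as [H|H].
  - destruct (path_mono d n m H). destruct (path_good d m) as [_ [_ G]]. lra.
  - destruct (path_mono d m n H). destruct (path_good d n) as [_ [_ G]]. lra.
Qed.

Lemma path_prefix d e n : (forall i, (i < n)%nat -> d i = e i) -> path d n = path e n.
Proof.
  induction n; intros H; simpl; auto. rewrite IHn by (intros; apply H; lia). rewrite H by lia. auto.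
Qed.

Definition sp d k := split (fst (path d k)) (snd (path d k)).

Lemma sp_spec d k : W (sp d k) /\ fst (path d k) < sp d k < snd (path d k) /\
  forall w', W w' -> fst (path d k) < w' < snd (path d k) -> (cd (sp d k) <= cd w')%nat.
Proof.
  destruct (path_good d k) as [H1 [H2 H3]]. apply split_spec; auto.
Qed.

Lemma m_incr d k : (cd (sp d k) < cd (sp d (S k)))%nat.
Proof.
  destruct (sp_spec d k) as [Hw [Hr Hmin]]. destruct (sp_spec d (S k)) as [Hw' [Hr' _]].
  simpl path in Hr'. unfold mstep in Hr'. fold (sp d k) in Hr'.
  assert (fst (path d k) < sp d (S k) < snd (path d k) /\ sp d (S k) <> sp d k) as [Hin Hne].
  { destruct (d k); simpl in Hr'; split; try lra; intros E; rewrite E in Hr'; lra. }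
  pose proof (Hmin _ Hw' Hin).
  destruct (Nat.eq_dec (cd (sp d k)) (cd (sp d (S k)))) as [E|E]; [|lia].
  exfalso. apply Hne. symmetry. apply cd_inj; auto.
Qed.

Lemma m_ge d k : (k <= cd (sp d k))%nat.
Proof. induction k; [lia|]. pose proof (m_incr d k). lia. Qed.

Lemma leave d w : W w -> exists n, ~ (fst (path d n) < w < snd (path d n)).
Proof.
  intros Hw. exists (S (cd w)). intros Hin.
  destruct (sp_spec d (S (cd w))) as [_ [_ Hmin]]. pose proof (Hmin w Hw Hin).
  pose proof (m_ge d (S (cd w))). lia.
Qed.

Fixpoint st (s : R * tag) (n : nat) : R * R :=
  match n with O => (a, b)
  | S n => mstep (st s n) (bdec (plt (split (fst (st s n)) (snd (st s n)), TM) s)) end.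
Definition D (s : R * tag) (n : nat) : bool := bdec (plt (split (fst (st s n)) (snd (st s n)), TM) s).

Lemma st_path s n : st s n = path (D s) n.
Proof. induction n; simpl; auto. fold (D s n). rewrite IHn. auto. Qed.

Definition okp (s : R * tag) := ~ (W (fst s) /\ snd s = TM).
Definition inK (A B : R) (s : R * tag) := ple (A,TR) s /\ ple s (B,TL).

Lemma st_in s : okp s -> inK a b s -> forall n, inK (fst (path (D s) n)) (snd (path (D s) n)) s.
Proof.
  intros Hok Hab n. induction n; simpl; auto.
  rewrite <- st_path in *. fold (D s n).
  destruct (sp_spec (D s) n) as [Hw _]. unfold sp in Hw. rewrite <- st_path in Hw.
  unfold mstep. destruct (D s n) eqn:E; simpl; unfold D in E.
  - apply (proj1 (bdec_t _)) in E. split; [apply hat_between_l; auto| apply IHn].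
  - apply (proj1 (bdec_f _)) in E. split; [apply IHn|]. apply hat_between_r.
    destruct (not_plt_ple _ _ E) as [H|H]; auto. exfalso. apply Hok. rewrite H; simpl; auto.
Qed.

Lemma inside_D d n s' : plt (fst (path d n), TM) s' -> plt s' (snd (path d n), TM) ->
  forall i, (i < n)%nat -> st s' i = path d i -> D s' i = d i.
Proof.
  intros H1 H2 i Hi E. unfold D. rewrite E. fold (sp d i).
  destruct (path_mono d (S i) n Hi) as [M1 M2]. simpl path in M1, M2. unfold mstep in M1, M2.
  fold (sp d i) in M1, M2.
  destruct (d i); simpl in M1, M2.
  - apply (proj2 (bdec_t _)). apply (ple_inj_l _ (fst (path d n))); auto.
  - apply (proj2 (bdec_f _)). intros H. apply (plt_asym _ _ H). apply (ple_inj_r _ (snd (path d n))); auto.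
Qed.

Lemma inside_st d n s' : plt (fst (path d n), TM) s' -> plt s' (snd (path d n), TM) ->
  forall i, (i <= n)%nat -> st s' i = path d i.
Proof.
  intros H1 H2 i. induction i; intros Hi; simpl; auto.
  rewrite IHi by lia. fold (sp d i). unfold sp, mstep.
  pose proof (inside_D d n s' H1 H2 i ltac:(lia) (IHi ltac:(lia))) as HD.
  unfold D in HD. rewrite IHi in HD by lia. rewrite HD. auto.
Qed.

Lemma inside_agree d n s' : plt (fst (path d n), TM) s' -> plt s' (snd (path d n), TM) ->
  forall i, (i < n)%nat -> D s' i = d i.
Proof.
  intros H1 H2 i Hi. apply (inside_D d n s' H1 H2 i Hi). apply (inside_st d n s' H1 H2). lia.
Qed.

Definition hokp (s : R * tag) := I (fst s) /\ (W (fst s) \/ snd s = TM).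

Lemma D_inj s1 s2 : hokp s1 -> hokp s2 -> okp s1 -> okp s2 -> inK a b s1 -> inK a b s2 ->
  D s1 = D s2 -> s1 = s2.
Proof.
  intros Hh1 Hh2 Ho1 Ho2 Hk1 Hk2 E.
  assert (forall s1 s2, hokp s1 -> hokp s2 -> okp s1 -> okp s2 -> inK a b s1 -> inK a b s2 ->
     D s1 = D s2 -> plt s1 s2 -> False) as Key.
  { clear s1 s2 Hh1 Hh2 Ho1 Ho2 Hk1 Hk2 E. intros s1 s2 Hh1 Hh2 Ho1 Ho2 Hk1 Hk2 E Hlt.
    assert (exists w, W w /\ plt s1 (w,TM) /\ plt (w,TM) s2) as [w [Hw [L1 L2]]].
    { destruct s1 as [x1 t1], s2 as [x2 t2]. unfold hokp, okp in *; simpl in *.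
      destruct Hlt as [Hlt|[Hx Ht]].
      - destruct (dens2 x1 x2 (proj1 Hh1) (proj1 Hh2) Hlt) as [w [Hw Hr]].
        exists w. split; auto. split; left; simpl; lra.
      - simpl in Hx, Ht. subst x2. destruct t1, t2; simpl in Ht; try tauto.
        + destruct Hh1 as [_ [H|H]]; [|discriminate]. tauto.
        + destruct Hh1 as [_ [H|H]]; [|discriminate].
          exists x1. split; auto. split; right; simpl; auto.
        + destruct Hh2 as [_ [H|H]]; [|discriminate]. tauto. }
    destruct (leave (D s1) w Hw) as [n Hn]. apply Hn.
    destruct (st_in s1 Ho1 Hk1 n) as [A _]. destruct (st_in s2 Ho2 Hk2 n) as [_ B].
    rewrite <- E in B.
    pose proof (ple_plt_trans _ _ _ A L1) as P1. pose proof (plt_ple_trans _ _ _ L2 B) as P2.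
    destruct P1 as [P1|[P1 P1']], P2 as [P2|[P2 P2']]; simpl in *; try tauto; lra. }
  destruct (plt_total s1 s2) as [H|[H|H]]; auto; exfalso.
  - exact (Key s1 s2 Hh1 Hh2 Ho1 Ho2 Hk1 Hk2 E H).
  - exact (Key s2 s1 Hh2 Hh1 Ho2 Ho1 Hk2 Hk1 (eq_sym E) H).
Qed.

Lemma D_surj d : exists s, hokp s /\ okp s /\ inK a b s /\ D s = d.
Proof.
  set (E := fun x => exists n, x = fst (path d n)).
  assert (Hb : bound E) by (exists b; intros x [n ->]; pose proof (path_lt d n 0); simpl in *; lra).
  destruct (completeness E Hb (ex_intro _ a (ex_intro _ 0%nat eq_refl))) as [x0 [Hub Hlub]].
  assert (Hle : forall n, fst (path d n) <= x0) by (intros n; apply Hub; exists n; auto).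
  assert (Hge : forall n, x0 <= snd (path d n)).
  { intros n. apply Hlub. intros x [m ->]. left. apply path_lt. }
  set (tg := if excluded_middle_informative (W x0) then
               (if excluded_middle_informative (exists n, fst (path d n) = x0) then TR else TL) else TM).
  set (s := (x0, tg)).
  assert (Hstep : forall n, st s n = path d n -> D s n = d n).
  { intros n En. unfold D. rewrite En. fold (sp d n).
    destruct (sp_spec d n) as [Hw [Hr _]].
    pose proof (Hle (S n)) as L. pose proof (Hge (S n)) as G.
    simpl in L, G. unfold mstep in L, G. fold (sp d n) in L, G.
    destruct (d n) eqn:Edn; simpl in L, G.
    - apply (proj2 (bdec_t _)). destruct L as [L|L]; [left; simpl; auto|].
      right; simpl; split; auto. unfold tg.
      destruct excluded_middle_informative as [_|C]; [|rewrite L in Hw; tauto].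
      destruct excluded_middle_informative as [_|C]; [simpl; auto|].
      exfalso; apply C. exists (S n). simpl. unfold mstep. rewrite Edn. simpl. auto.
    - apply (proj2 (bdec_f _)). intros [H|[H1 H2]]; simpl in *; [lra|].
      unfold tg in H2.
      destruct excluded_middle_informative as [_|C]; [|rewrite H1 in Hw; tauto].
      destruct excluded_middle_informative as [[m Hm]|C]; [|simpl in H2; auto].
      pose proof (path_lt d m (S n)) as P. simpl in P. unfold mstep in P. rewrite Edn in P.
      simpl in P. fold (sp d n) in P. lra. }
  assert (Hst : forall n, st s n = path d n).
  { induction n; simpl; auto. fold (D s n). rewrite (Hstep n IHn), IHn. auto. }
  assert (Ix0 : I x0).
  { apply (I_conv I HI a b); auto. split; [apply (Hle 0%nat)|apply (Hge 0%nat)]. }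
  exists s. split; [|split; [|split]].
  - split; simpl; auto. unfold tg. destruct excluded_middle_informative; auto.
  - unfold okp, s, tg; simpl. destruct excluded_middle_informative; [|tauto].
    destruct excluded_middle_informative; intros [_ H]; discriminate.
  - split.
    + destruct (Hle 0%nat) as [H|H]; [left; left; simpl; auto|]. simpl in H.
      right. unfold s, tg. subst x0. destruct (excluded_middle_informative (W a)) as [_|C]; [|tauto].
      destruct (excluded_middle_informative (exists n : nat, fst (path d n) = a)) as [_|C]; auto.
      exfalso; apply C. exists 0%nat; auto.
    + destruct (Hge 0%nat) as [H|H]; [left; left; simpl; auto|]. simpl in H.
      right. unfold s, tg. subst x0. destruct (excluded_middle_informative (W b)) as [_|C]; [|tauto].
      destruct (excluded_middle_informative (exists n : nat, fst (path d n) = b)) as [[m Hm]|C]; auto. exfalso.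
      pose proof (path_lt d m 0). simpl in *. lra.
  - apply functional_extensionality. intros n. apply Hstep, Hst.
Qed.

Lemma ple_trans p q r : ple p q -> ple q r -> ple p r.
Proof. intros [H|H] H'; [left; eapply plt_ple_trans; eauto| subst; auto]. Qed.

Lemma ple_trans_R x y t : x <= y -> ple (x,t) (y,t).
Proof. intros [H|H]; [left; left; auto|right; subst; auto]. Qed.

Lemma ple_fst p q : ple p q -> fst p <= fst q.
Proof. intros [[H|[H _]]|H]; [lra|lra|subst; lra]. Qed.

Lemma ple_TR_TL x y : ple (x,TR) (y,TL) -> x < y.
Proof. intros [[H|[H H']]|H]; simpl in *; [auto|tauto|discriminate]. Qed.

Lemma left_shrink s pp : hokp s -> okp s -> inK a b s -> I (fst pp) -> snd pp <> TL -> plt pp s ->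
  exists n, plt pp (fst (path (D s) n), TR).
Proof.
  intros Hh Ho Hk Ipp Hpp Hlt.
  destruct s as [x0 tg], pp as [z u]. simpl in *.
  destruct Hlt as [Hlt|[Hz Ht]]; simpl in *.
  - destruct (dens2 z x0 Ipp (proj1 Hh) Hlt) as [w [Hw Hr]].
    destruct (leave (D (x0,tg)) w Hw) as [n Hn]. exists n.
    destruct (st_in _ Ho Hk n) as [A B]. apply ple_fst in B. simpl in B.
    left; simpl. destruct (Rlt_dec (fst (path (D (x0, tg)) n)) w); [exfalso; apply Hn; lra|lra].
  - subst z. destruct u, tg; simpl in Ht; try tauto.
    destruct Hh as [_ [Hw|Hw]]; [|discriminate].
    destruct (leave (D (x0,TR)) x0 Hw) as [n Hn]. exists n.
    destruct (st_in _ Ho Hk n) as [A B]. apply ple_TR_TL in B. apply ple_fst in A. simpl in A.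
    assert (fst (path (D (x0, TR)) n) = x0) as E.
    { destruct (Rlt_dec (fst (path (D (x0, TR)) n)) x0); [exfalso; apply Hn; lra|lra]. }
    rewrite E. right; simpl; auto.
Qed.

Lemma right_shrink s qq : hokp s -> okp s -> inK a b s -> I (fst qq) -> snd qq <> TR -> plt s qq ->
  exists n, plt (snd (path (D s) n), TL) qq.
Proof.
  intros Hh Ho Hk Iqq Hqq Hlt.
  destruct s as [x0 tg], qq as [z u]. simpl in *.
  destruct Hlt as [Hlt|[Hz Ht]]; simpl in *.
  - destruct (dens2 x0 z (proj1 Hh) Iqq Hlt) as [w [Hw Hr]].
    destruct (leave (D (x0,tg)) w Hw) as [n Hn]. exists n.
    destruct (st_in _ Ho Hk n) as [A B]. apply ple_fst in A. simpl in A.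
    left; simpl. destruct (Rlt_dec w (snd (path (D (x0, tg)) n))); [exfalso; apply Hn; lra|lra].
  - subst z. destruct u, tg; simpl in Ht; try tauto.
    destruct Hh as [_ [Hw|Hw]]; [|discriminate].
    destruct (leave (D (x0,TL)) x0 Hw) as [n Hn]. exists n.
    destruct (st_in _ Ho Hk n) as [A B]. apply ple_TR_TL in A. apply ple_fst in B. simpl in B.
    assert (snd (path (D (x0, TL)) n) = x0) as E.
    { destruct (Rlt_dec x0 (snd (path (D (x0, TL)) n))); [exfalso; apply Hn; lra|lra]. }
    rewrite E. right; simpl; auto.
Qed.

Definition Kt := {t : checkI I W | closed_seg I W a b t}.
Definition pt (k : Kt) : R * tag := hpt (proj1_sig (proj1_sig k)).

Lemma pt_props k : hokp (pt k) /\ okp (pt k) /\ inK a b (pt k).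
Proof.
  destruct k as [[[p Hp] Hc] Hk]. unfold pt; simpl. split; [exact Hp|]. split; [exact Hc|exact Hk].
Qed.

Lemma Kt_ext k1 k2 : pt k1 = pt k2 -> k1 = k2.
Proof.
  destruct k1 as [[[p1 h1] c1] k1], k2 as [[[p2 h2] c2] k2]. unfold pt, hpt; simpl. intros E. subst p2.
  assert (h1 = h2) by apply proof_irrelevance. subst h2.
  assert (c1 = c2) by apply proof_irrelevance. subst c2.
  assert (k1 = k2) by apply proof_irrelevance. subst k2. auto.
Qed.

Lemma surjK d : exists k : Kt, D (pt k) = d.
Proof.
  destruct (D_surj d) as [s [Hh [Ho [Hk Hd]]]].
  exists (exist _ (exist _ (exist _ s Hh) Ho) Hk). exact Hd.
Qed.

Definition Ct := {x : R | Cantor x}.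
Definition Fm (k : Kt) : Ct := exist _ (val (D (pt k))) (val_cantor _).
Definition dig (x : Ct) : nat -> bool := proj1_sig (constructive_indefinite_description _ (proj2_sig x)).
Lemma dig_val x : val (dig x) = proj1_sig x.
Proof. unfold dig. destruct constructive_indefinite_description; simpl. apply cantor_val; auto. Qed.
Definition Gm (x : Ct) : Kt := proj1_sig (constructive_indefinite_description _ (surjK (dig x))).
Lemma Gm_D x : D (pt (Gm x)) = dig x.
Proof. unfold Gm. destruct constructive_indefinite_description; simpl; auto. Qed.

Lemma GF k : Gm (Fm k) = k.
Proof.
  apply Kt_ext. destruct (pt_props (Gm (Fm k))) as [H1 [H2 H3]]. destruct (pt_props k) as [H1' [H2' H3']].
  apply D_inj; auto. rewrite Gm_D. apply val_inj. rewrite dig_val. auto.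
Qed.

Lemma FG x : Fm (Gm x) = x.
Proof.
  destruct x as [x Hx]. unfold Fm. apply eq_sig_hprop; [intros; apply proof_irrelevance|].
  simpl. rewrite Gm_D. apply (dig_val (exist _ x Hx)).
Qed.

Lemma K_crit (V : Kt -> Prop) :
  (forall k, V k -> exists p q, basis_interval p q /\ oint p q (proj1_sig (proj1_sig k)) /\
     forall k', oint p q (proj1_sig (proj1_sig k')) -> V k') ->
  subspace (check_open I W) (closed_seg I W a b) V.
Proof.
  intros H.
  exists (fun t => exists p q, basis_interval p q /\ oint p q (proj1_sig t) /\
     forall k' : Kt, oint p q (proj1_sig (proj1_sig k')) -> V k').
  split.
  - apply check_open_crit. intros t [p [q [Hb [Ho Hall]]]]. exists p, q.
    split; auto. split; auto. intros t' Ht'. exists p, q. auto.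
  - intros k. split; [apply H|]. intros [p [q [_ [Ho Hall]]]]. apply Hall. auto.
Qed.

Lemma K_elim (V : Kt -> Prop) k : subspace (check_open I W) (closed_seg I W a b) V -> V k ->
  exists p q, basis_interval p q /\ oint p q (proj1_sig (proj1_sig k)) /\
     forall k', oint p q (proj1_sig (proj1_sig k')) -> V k'.
Proof.
  intros [U [HU HV]] Hk. apply HV in Hk.
  destruct (check_open_elim I W U _ HU Hk) as [p [q [Hb [Ho Hall]]]].
  exists p, q. split; auto. split; auto. intros k' H. apply HV. apply Hall. auto.
Qed.

Lemma F_cont : continuous (subspace (check_open I W) (closed_seg I W a b)) (subspace R_open Cantor) Fm.
Proof.
  intros V [U [HU HV]]. apply K_crit. intros k Hk. apply HV in Hk. simpl in Hk.
  destruct (HU _ Hk) as [eps [He Hball]]. destruct (small_pow eps He) as [n Hn].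
  set (d := D (pt k)). destruct (path_good d n) as [WA [WB _]].
  exists (Pt (mkhat I W _ (HWI _ WA))), (Pt (mkhat I W _ (HWI _ WB))).
  destruct (pt_props k) as [_ [Ho Hk']].
  destruct (st_in _ Ho Hk' n) as [A B].
  assert (Hin : oint (Pt (mkhat I W _ (HWI _ WA))) (Pt (mkhat I W _ (HWI _ WB))) (proj1_sig (proj1_sig k))).
  { split; simpl.
    - apply (plt_ple_trans _ (fst (path d n), TR)); [right; simpl; auto|exact A].
    - apply (ple_plt_trans _ (snd (path d n), TL)); [exact B|right; simpl; auto]. }
  split; [|split; auto].
  - split; [eexists; exact Hin|]. split; intros s Hs; injection Hs; intros <-; simpl; discriminate.
  - intros k' [H1 H2]. apply HV. simpl. apply Hball.
    pose proof (val_close (D (pt k')) d n (inside_agree d n (pt k') H1 H2)). unfold d in *. lra.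
Qed.

Lemma lower_n k (p : ext (hatI I W)) : (forall pp, p = Pt pp -> snd (hpt pp) <> TL) ->
  ext_lt p (Pt (proj1_sig (proj1_sig k))) ->
  exists n1, forall m, (n1 <= m)%nat -> forall s' : hatI I W,
    ple (fst (path (D (pt k)) m), TR) (hpt s') -> ext_lt p (Pt s').
Proof.
  intros Hp Hlt. destruct p as [|pp|]; simpl in *; [exists 0%nat; auto| |tauto].
  destruct (pt_props k) as [Hh [Ho Hk]].
  destruct (left_shrink (pt k) (hpt pp) Hh Ho Hk (proj1 (proj2_sig pp)) (Hp pp eq_refl) Hlt) as [n1 Hn1].
  exists n1. intros m Hm s' Hs'. apply (plt_ple_trans _ _ _ Hn1).
  destruct (path_mono (D (pt k)) n1 m Hm) as [M _].
  apply (ple_trans _ _ _ (ple_trans_R _ _ TR M) Hs').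
Qed.

Lemma upper_n k (q : ext (hatI I W)) : (forall qq, q = Pt qq -> snd (hpt qq) <> TR) ->
  ext_lt (Pt (proj1_sig (proj1_sig k))) q ->
  exists n2, forall m, (n2 <= m)%nat -> forall s' : hatI I W,
    ple (hpt s') (snd (path (D (pt k)) m), TL) -> ext_lt (Pt s') q.
Proof.
  intros Hq Hlt. destruct q as [|qq|]; simpl in *; [tauto| |exists 0%nat; auto].
  destruct (pt_props k) as [Hh [Ho Hk]].
  destruct (right_shrink (pt k) (hpt qq) Hh Ho Hk (proj1 (proj2_sig qq)) (Hq qq eq_refl) Hlt) as [n2 Hn2].
  exists n2. intros m Hm s' Hs'. apply (ple_plt_trans _ (snd (path (D (pt k)) n2), TL)); [|exact Hn2].
  destruct (path_mono (D (pt k)) n2 m Hm) as [_ M].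
  apply (ple_trans _ _ _ Hs' (ple_trans_R _ _ TL M)).
Qed.
Lemma G_cont : continuous (subspace R_open Cantor) (subspace (check_open I W) (closed_seg I W a b)) Gm.
Proof.
  intros V HV.
  exists (fun y => exists eps, 0 < eps /\ forall x : Ct, Rabs (proj1_sig x - y) < eps -> V (Gm x)).
  split.
  - intros y [eps [He H]]. exists (eps/2). split; [lra|]. intros z Hz.
    exists (eps/2). split; [lra|]. intros x Hx. apply H.
    replace (proj1_sig x - y) with ((proj1_sig x - z) + (z - y)) by ring.
    pose proof (Rabs_triang (proj1_sig x - z) (z - y)). lra.
  - intros x. split.
    + intros Hx. destruct (K_elim V (Gm x) HV Hx) as [p [q [[_ [Hp Hq]] [[o1 o2] Hall]]]].
      destruct (lower_n (Gm x) p Hp o1) as [n1 Hn1].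
      destruct (upper_n (Gm x) q Hq o2) as [n2 Hn2].
      set (n := Nat.max n1 n2).
      exists (/ 3 ^ n). split; [apply inv3_pos|]. intros x' Hx'.
      apply Hall.
      assert (Hag : forall i, (i < n)%nat -> dig x' i = dig x i).
      { apply agree_of_close. rewrite !dig_val. auto. }
      assert (Hpath : path (D (pt (Gm x'))) n = path (D (pt (Gm x))) n).
      { rewrite !Gm_D. apply path_prefix. auto. }
      destruct (pt_props (Gm x')) as [_ [Ho Hk]].
      destruct (st_in _ Ho Hk n) as [A B]. rewrite Hpath in A, B.
      split.
      * apply (Hn1 n ltac:(lia)). exact A.
      * apply (Hn2 n ltac:(lia)). exact B.
    + intros [eps [He H]]. apply H. rewrite Rminus_diag, Rabs_R0. auto.
Qed.

Lemma part3 : homeomorphic (subspace (check_open I W) (closed_seg I W a b)) (subspace R_open Cantor).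
Proof.
  exists Fm, Gm. split; [exact GF|]. split; [exact FG|]. split; [exact F_cont|exact G_cont].
Qed.

End Tree.

Theorem proposition3p8 (I W : R -> Prop)
  (HI : is_open_interval I)
  (HWI : forall w, W w -> I w)
  (HWc : countable_set W)
  (HWd : dense_in W I) :
  (* the sets [a^R,b^L] \cap \check I (a < b in W) form a basis of \check I *)
  ((forall a b, W a -> W b -> a < b -> check_open I W (closed_seg I W a b)) /\
   (forall V, check_open I W V -> forall s, V s ->
      exists a b, W a /\ W b /\ a < b /\ closed_seg I W a b s /\
        forall t, closed_seg I W a b t -> V t)) /\
  (* each of them is homeomorphic to the Cantor set *)
  (forall a b, W a -> W b -> a < b ->
     homeomorphic (subspace (check_open I W) (closed_seg I W a b))
                  (subspace R_open Cantor)).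
Proof.
  split; [split|].
  - apply part1; auto.
  - apply part2; auto.
  - intros a b Wa Wb ab.
    destruct HWc as [f Hf].
    set (cd := fun x => match excluded_middle_informative (W x) with
                        | left H => f (exist _ x H) | right _ => 0%nat end).
    assert (cd_inj : forall x y, W x -> W y -> cd x = cd y -> x = y).
    { intros x y Hx Hy. unfold cd.
      destruct (excluded_middle_informative (W x)); [|tauto].
      destruct (excluded_middle_informative (W y)); [|tauto].
      intros E. apply Hf in E. injection E; auto. }
    exact (part3 I W HI HWI HWd cd cd_inj a b Wa Wb ab).
Qed.
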